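(* For every $n\in\mathbb{N}$ and every real $t$ with $|t|<1$, \[ \frac{(\operatorname{arctanh} t)^n}{n!}=\sum_{k=0}^{\infty}\left(\sum_{\ell_{n-1}=0}^{k}\frac{1}{2\ell_{n-1}+n-1}\sum_{\ell_{n-2}=0}^{\ell_{n-1}}\frac{1}{2\ell_{n-2}+n-2}\cdots\sum_{\ell_2=0}^{\ell_3}\frac{1}{2\ell_2+2}\sum_{\ell_1=0}^{\ell_2}\frac{1}{2\ell_1+1}\right)\frac{t^{2k+n}}{2k+n}, \] i.e. the coefficient in parentheses is $\prod_{m=1}^{n-1}\sum_{\ell_m=0}^{\ell_{m+1}}\frac{1}{2\ell_m+m}$ (nested sums, with $\ell_n=k$), which is understood to be $1$ when $n=1$. *)

(* Defs.v *)
From Stdlib Require Import Reals Arith.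
From Coquelicot Require Import Coquelicot.
Open Scope R_scope.

Definition artanh (t : R) : R := / 2 * ln ((1 + t) / (1 - t)).

(* atanh_coef m k = coefficient for n = m+1 in the theorem:
   atanh_coef 0 k = 1  (case n = 1),
   atanh_coef (m+1) k = sum_{l=0}^{k} 1/(2l + m + 1) * atanh_coef m l,
   i.e. for n = m+2 the outermost sum over l_{n-1} = l from 0 to k with
   weight 1/(2 l_{n-1} + n - 1), nested around the coefficient for n-1. *)
Fixpoint atanh_coef (m : nat) (k : nat) : R :=
  match m with
  | O => 1
  | S m' => sum_f_R0 (fun l => / (2 * INR l + INR m) * atanh_coef m' l) k
  end.

(* Main.v *)
Require Import Defs.
From Stdlib Require Import Reals Arith Lia Lra.
From Coquelicot Require Import Coquelicot.
Open Scope R_scope.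
From Stdlib Require Import Lra Lia.

Definition A (m k : nat) : R := atanh_coef m k / INR (2 * k + m + 1).

Lemma INR_pos (n : nat) : 0 < INR (S n).
Proof. apply lt_0_INR; lia. Qed.

Lemma coefS m K : atanh_coef (S m) K = sum_f_R0 (A m) K.
Proof.
  simpl atanh_coef. apply sum_eq. intros i _. unfold A.
  replace (2 * i + m + 1)%nat with (S (2*i+m))%nat by lia.
  rewrite S_INR, plus_INR, mult_INR, S_INR. simpl (INR 2).
  unfold Rdiv; rewrite Rmult_comm; f_equal; f_equal; destruct m; simpl; ring.
Qed.

Lemma coef_nonneg m k : 0 <= atanh_coef m k.
Proof.
  revert k; induction m; intro k; simpl. lra.
  apply cond_pos_sum. intro l. apply Rmult_le_pos; auto.
  left. apply Rinv_0_lt_compat.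
  destruct m. simpl. pose proof (pos_INR l). lra.
  pose proof (pos_INR l). pose proof (INR_pos m). lra.
Qed.

Lemma A_nonneg m k : 0 <= A m k.
Proof.
  unfold A. apply Rmult_le_pos. apply coef_nonneg.
  left. apply Rinv_0_lt_compat. replace (2*k+m+1)%nat with (S (2*k+m)) by lia.
  apply INR_pos.
Qed.

Lemma conv_comm (f g : nat -> R) K :
  sum_f_R0 (fun k => f k * g (K - k)%nat) K = sum_f_R0 (fun k => g k * f (K - k)%nat) K.
Proof.
  rewrite <- sum_f_R0_skip. apply sum_eq. intros i Hi.
  replace (K - (K - i))%nat with i by lia. ring.
Qed.

Lemma conv_partial (X Y : nat -> R) K :
  sum_f_R0 (fun j => Y j * sum_f_R0 X (K - j)%nat) K
  = sum_f_R0 (fun k => sum_f_R0 (fun j => Y j * X (k - j)%nat) k) K.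
Proof.
  induction K.
  - simpl. ring.
  - rewrite tech5; rewrite (tech5 (fun k => _)). rewrite <- IHK.
    rewrite tech5. replace (S K - S K)%nat with 0%nat by lia.
    rewrite (sum_eq (fun j => Y j * sum_f_R0 X (S K - j)%nat)
      (fun j => Y j * sum_f_R0 X (K - j)%nat + Y j * X (S K - j)%nat)).
    2:{ intros i Hi. replace (S K - i)%nat with (S (K - i)) by lia.
        rewrite tech5. ring. }
    rewrite sum_plus. simpl (sum_f_R0 X 0). ring.
Qed.

Lemma Q_of_R m :
  (forall K, sum_f_R0 (fun k => atanh_coef m k * A 0 (K - k)%nat) K = INR (m + 1) * atanh_coef (S m) K) ->
  forall K, INR (m + 2) * A (S m) K = sum_f_R0 (fun k => A m k * A 0 (K - k)%nat) K.
Proof.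
  intros HR K.
  assert (HD : 0 < INR (2 * K + S m + 1)) by (replace (2*K+S m+1)%nat with (S (2*K+S m)) by lia; apply INR_pos).
  apply (Rmult_eq_reg_r (INR (2 * K + S m + 1))); [| lra].
  rewrite (Rmult_comm (sum_f_R0 _ _)), scal_sum.
  rewrite (sum_eq _ (fun k => atanh_coef m k * A 0 (K - k)%nat + A m k)).
  2:{ intros i Hi. unfold A.
      assert (H1 : 0 < INR (2 * i + m + 1)) by (replace (2*i+m+1)%nat with (S (2*i+m)) by lia; apply INR_pos).
      assert (H2 : 0 < INR (2 * (K - i) + 0 + 1)) by (replace (2*(K-i)+0+1)%nat with (S (2*(K-i))) by lia; apply INR_pos).
      replace (INR (2 * K + S m + 1)) with (INR (2 * i + m + 1) + INR (2 * (K - i) + 0 + 1))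
        by (rewrite <- plus_INR; f_equal; lia).
      simpl (atanh_coef 0 _). field. lra. }
  rewrite sum_plus, HR, <- coefS.
  unfold A. field_simplify; [| lra].
  rewrite !plus_INR. simpl. field.
Qed.

Lemma Rm m : forall K,
  sum_f_R0 (fun k => atanh_coef m k * A 0 (K - k)%nat) K = INR (m + 1) * atanh_coef (S m) K.
Proof.
  induction m; intro K.
  - rewrite coefS. simpl atanh_coef.
    rewrite (sum_eq _ (fun k => A 0 (K - k)%nat)) by (intros; ring).
    rewrite sum_f_R0_skip. simpl. ring.
  - pose proof (Q_of_R m IHm) as HQ.
    rewrite (sum_eq _ (fun k => sum_f_R0 (A m) k * A 0 (K - k)%nat)) by (intros; rewrite coefS; reflexivity).
    rewrite conv_comm, conv_partial.
    rewrite (sum_eq _ (fun k => INR (m + 2) * A (S m) k)).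
    2:{ intros i _. rewrite HQ. apply conv_comm. }
    rewrite (coefS (S m)).
    replace (S m + 1)%nat with (m + 2)%nat by lia.
    rewrite scal_sum. apply sum_eq. intros; ring.
Qed.

Definition e (n : nat) : R := if Nat.even n then 1 else 0.

Lemma pow_le1 r n : 0 <= r <= 1 -> r ^ n <= 1.
Proof. intros H; induction n; simpl; nra. Qed.

Lemma sq_lt1 x : Rabs x < 1 -> Rabs (x ^ 2) < 1.
Proof.
  intros H. rewrite <- RPow_abs. pose proof (Rabs_pos x). simpl. nra.
Qed.

Lemma zero_series x : Rabs x < 1 -> is_series (fun n : nat => scal (pow_n x n) 0) 0.
Proof.
  intros H. pose proof (is_series_scal 0 _ _ (is_series_geom x H)) as G.
  unfold scal in G; simpl in G; unfold mult in G; simpl in G. rewrite Rmult_0_l in G.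
  eapply is_series_ext; [|exact G]. intro n. unfold scal; simpl; unfold mult; simpl. ring.
Qed.

Lemma e_series x : Rabs x < 1 -> is_pseries e x (/ (1 - x ^ 2)).
Proof.
  intros H.
  replace (/ (1 - x ^ 2)) with (/ (1 - x ^ 2) + x * 0) by ring.
  apply is_pseries_odd_even.
  - unfold is_pseries. eapply is_series_ext; [| apply (is_series_geom (x ^ 2) (sq_lt1 x H))].
    intro n. unfold e. rewrite Nat.even_mul. simpl. unfold scal; simpl; unfold mult; simpl. symmetry; etransitivity; [apply Rmult_1_r|]. exact (pow_n_pow _ _).
  - unfold is_pseries. eapply is_series_ext; [| apply (zero_series (x ^ 2) (sq_lt1 x H))].
    intro n. unfold e. rewrite Nat.even_odd. reflexivity.
Qed.

Lemma e_rad x : Rabs x < 1 -> Rbar_lt (Rabs x) (CV_radius e).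
Proof.
  intros H. destruct (CV_radius_bounded e) as [Hub _].
  set (r := (Rabs x + 1) / 2).
  apply Rbar_lt_le_trans with (Finite r). simpl. unfold r; lra.
  apply Hub. exists 1. intro n.
  pose proof (Rabs_pos x).
  rewrite Rabs_mult, <- RPow_abs.
  assert (Habs : Rabs r = r) by (apply Rabs_pos_eq; unfold r; lra).
  rewrite Habs.
  assert (Hr : r ^ n <= 1) by (apply pow_le1; unfold r; lra).
  assert (Hr0 : 0 <= r ^ n) by (apply pow_le; unfold r; lra).
  unfold e; destruct (Nat.even n); rewrite ?Rabs_R1, ?Rabs_R0; nra.
Qed.

Definition F (x : R) := PSeries (PS_Int e) x.

Lemma F_derive x : Rabs x < 1 -> is_derive F x (/ (1 - x ^ 2)).
Proof.
  intros H.
  assert (Hr : Rbar_lt (Rabs x) (CV_radius (PS_Int e))) by (rewrite CV_radius_Int; apply e_rad; auto).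
  pose proof (is_derive_PSeries _ _ Hr) as D.
  assert (E : PSeries (PS_derive (PS_Int e)) x = / (1 - x ^ 2)).
  { rewrite (PSeries_ext _ e). apply is_pseries_unique, e_series; auto.
    intro n. unfold PS_derive, PS_Int. field. apply not_0_INR. lia. }
  rewrite E in D. exact D.
Qed.

Lemma artanh_derive x : Rabs x < 1 -> is_derive artanh x (/ (1 - x ^ 2)).
Proof.
  intros H. apply Rabs_def2 in H. unfold artanh.
  destruct H as [H1 H2].
  auto_derive.
  - split; [intro; lra | split; auto]. apply Rdiv_lt_0_compat; lra.
  - field; repeat split; intro; nra.
Qed.

Lemma F_artanh t : Rabs t < 1 -> F t = artanh t.
Proof.
  intros Ht.
  assert (HM : forall c, Rabs (c - 0) <= Rabs t ->
     is_derive (fun y => F y - artanh y) c 0).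
  { intros c Hc. rewrite Rminus_0_r in Hc.
    replace 0 with (/ (1 - c ^ 2) - / (1 - c ^ 2)) by ring.
    apply (is_derive_minus F artanh). apply F_derive; lra. apply artanh_derive; lra. }
  destruct (MVT_cor4 (fun y => F y - artanh y) (fun _ => 0) 0 (Rabs t) HM t) as [c [Hc _]].
  rewrite Rminus_0_r; lra.
  unfold F in Hc. rewrite PSeries_0 in Hc. unfold F.
  assert (A0 : artanh 0 = 0).
  { unfold artanh. replace ((1 + 0) / (1 - 0)) with 1 by field. rewrite ln_1. ring. }
  rewrite A0 in Hc. simpl in Hc. lra.
Qed.

Lemma o_eq n : PS_Int e (2 * n + 1) = / INR (2 * n + 1).
Proof.
  replace (2 * n + 1)%nat with (S (2 * n)) by lia. unfold PS_Int, e.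
  rewrite Nat.even_mul. simpl. unfold Rdiv. ring.
Qed.

Lemma ev_eq n : PS_Int e (2 * n) = 0.
Proof.
  destruct n. reflexivity.
  replace (2 * S n)%nat with (S (2 * n + 1)) by lia. unfold PS_Int, e.
  rewrite Nat.even_odd. unfold Rdiv. ring.
Qed.

Lemma base t : Rabs t < 1 ->
  is_series (fun k => atanh_coef 0 k * t ^ (2 * k + 1) / INR (2 * k + 1))
    (artanh t ^ 1 / INR (fact 1)).
Proof.
  intros Ht.
  assert (Hex : ex_pseries (fun n => PS_Int e (2 * n + 1)) (t ^ 2)).
  { unfold ex_pseries. apply (@ex_series_le R_AbsRing R_CompleteNormedModule) with (b := fun n => Rabs (t ^ 2) ^ n).
    - intro n. rewrite o_eq.
      change (Rabs (pow_n (t^2) n * / INR (2*n+1)) <= Rabs (t^2)^n).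
      rewrite Rabs_mult, pow_n_pow, <- RPow_abs.
      assert (H0 : 0 < INR (2 * n + 1)) by (apply lt_0_INR; lia).
      assert (H1 : 1 <= INR (2 * n + 1)) by (replace 1 with (INR 1) by reflexivity; apply le_INR; lia).
      rewrite (Rabs_pos_eq (/ INR _)) by (left; apply Rinv_0_lt_compat; lra).
      assert (Hp : 0 <= Rabs (t ^ 2) ^ n) by (apply pow_le, Rabs_pos).
      assert (/ INR (2 * n + 1) <= 1).
      { rewrite <- Rinv_1. apply Rinv_le_contravar; lra. }
      nra.
    - exists (/ (1 - Rabs (t ^ 2))). apply is_series_geom.
      rewrite Rabs_Rabsolu. apply sq_lt1; auto. }
  destruct Hex as [l2 Hl2].
  assert (Hev : is_pseries (fun n => PS_Int e (2 * n)) (t ^ 2) 0).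
  { unfold is_pseries. eapply is_series_ext; [| apply (zero_series (t ^ 2) (sq_lt1 t Ht))].
    intro n. rewrite ev_eq. reflexivity. }
  pose proof (is_pseries_odd_even _ _ _ _ Hev Hl2) as Hall.
  apply is_pseries_unique in Hall. fold (F t) in Hall. rewrite F_artanh in Hall by auto.
  replace (artanh t ^ 1 / INR (fact 1)) with (scal t l2)
    by (rewrite Hall; simpl; unfold scal; simpl; unfold mult; simpl; field).
  eapply is_series_ext; [| apply (is_series_scal t _ _ Hl2)].
  intro n. cbv beta. rewrite o_eq.
  change (t * (pow_n (t^2) n * / INR (2*n+1)) = 1 * t^(2*n+1) / INR (2*n+1)).
  rewrite pow_n_pow, pow_add, pow_mult. field.
  apply not_0_INR; lia.
Qed.

Definition Term (m : nat) (t : R) (k : nat) : R :=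
  atanh_coef m k * t ^ (2 * k + S m) / INR (2 * k + S m).

Lemma term_A m t k : Term m t k = A m k * t ^ (2 * k + S m).
Proof.
  unfold Term, A. replace (2 * k + m + 1)%nat with (2 * k + S m)%nat by lia.
  unfold Rdiv. ring.
Qed.

Lemma term_abs m t k : Rabs (Term m t k) = Term m (Rabs t) k.
Proof.
  rewrite !term_A, Rabs_mult, RPow_abs. rewrite (Rabs_pos_eq (A m k)) by apply A_nonneg.
  reflexivity.
Qed.

Lemma main_series m : forall t, Rabs t < 1 ->
  is_series (Term m t) (artanh t ^ S m / INR (fact (S m))).
Proof.
  induction m; intros t Ht.
  - unfold Term. apply base; auto.
  - assert (Habs : forall j, (forall s, Rabs s < 1 -> is_series (Term j s) (artanh s ^ S j / INR (fact (S j)))) ->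
        ex_series (fun k => Rabs (Term j t k))).
    { intros j Hj. eexists. eapply is_series_ext; [| apply (Hj (Rabs t))].
      intro k. symmetry. apply term_abs. rewrite Rabs_Rabsolu; auto. }
    assert (H0 : forall s, Rabs s < 1 -> is_series (Term 0 s) (artanh s ^ 1 / INR (fact 1)))
      by (intros; unfold Term; apply base; auto).
    pose proof (is_series_mult _ _ _ _ (IHm t Ht) (H0 t Ht) (Habs m IHm) (Habs 0%nat H0)) as P.
    pose proof (is_series_scal (/ INR (m + 2)) _ _ P) as P2.
    replace (artanh t ^ S (S m) / INR (fact (S (S m))))
      with (scal (/ INR (m + 2)) (artanh t ^ S m / INR (fact (S m)) * (artanh t ^ 1 / INR (fact 1)))).
    2:{ change (/ INR (m + 2) * (artanh t ^ S m / INR (fact (S m)) * (artanh t ^ 1 / INR (fact 1)))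
              = artanh t ^ S (S m) / INR (fact (S (S m)))).
        replace (fact (S (S m))) with (S (S m) * fact (S m))%nat by reflexivity.
        rewrite mult_INR. replace (m + 2)%nat with (S (S m)) by lia.
        simpl (fact 1). simpl (INR 1).
        pose proof (INR_fact_neq_0 (S m)). pose proof (INR_pos (S m)).
        simpl pow. field. split; lra. }
    eapply is_series_ext; [| exact P2].
    intro K. cbv beta.
    change (/ INR (m + 2) * sum_f_R0 (fun k => Term m t k * Term 0 t (K - k)) K = Term (S m) t K).
    rewrite (sum_eq _ (fun k => (A m k * A 0 (K - k)%nat) * t ^ (2 * K + S (S m)))).
    2:{ intros i Hi. rewrite !term_A.
        replace (2 * K + S (S m))%nat with ((2 * i + S m) + (2 * (K - i) + 1))%nat by lia.
        rewrite !pow_add. ring. }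
    rewrite <- scal_sum, <- (Q_of_R m (Rm m)), term_A.
    pose proof (INR_pos (S m)). replace (m + 2)%nat with (S (S m)) by lia.
    field. lra.
Qed.

Theorem mainTheorem10 (n : nat) (t : R) :
  (1 <= n)%nat -> Rabs t < 1 ->
  is_series
    (fun k : nat => atanh_coef (n - 1) k * t ^ (2 * k + n) / INR (2 * k + n))
    (artanh t ^ n / INR (fact n)).
Proof.
  intros Hn Ht. destruct n as [|m]. lia.
  replace (S m - 1)%nat with m by lia.
  exact (main_series m t Ht).
Qed.
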